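(* Let $\mathcal S$ be a complete separable metric space, $\mu$ a boundedly finite Borel measure on $\mathcal S$ and $a,\rho,k>0$. For a finite family of pairwise disjoint bounded Borel sets $A_1,\dots,A_l$ and nonnegative integers $n_1,\dots,n_l$ define $$P_l(A_1,\dots,A_l;n_1,\dots,n_l)=\frac{\rho_{(k\sum_{i=1}^l\mu(A_i))}\,a_{(\sum_{i=1}^l n_i)}}{(\rho+a)_{(k\sum_{i=1}^l\mu(A_i)+\sum_{i=1}^l n_i)}}\prod_{i=1}^l\frac{[k\mu(A_i)]_{(n_i)}}{n_i!}.$$ Then (I) for every permutation $i_1,\dots,i_l$ of $1,\dots,l$, $P_l(A_{i_1},\dots,A_{i_l};n_{i_1},\dots,n_{i_l})=P_l(A_1,\dots,A_l;n_1,\dots,n_l)$; and (II) for $l\ge2$, $\sum_{r=0}^\infty P_l(A_1,\dots,A_l;n_1,\dots,n_{l-1},r)=P_{l-1}(A_1,\dots,A_{l-1};n_1,\dots,n_{l-1})$.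
   Context: For $x>0$, $\beta\ge0$, $x_{(\beta)}=\Gamma(x+\beta)/\Gamma(x)$, with the convention $0_{(0)}=1$ and $0_{(n)}=0$ for integers $n\ge1$. *)

(* Defs.v *)
From Stdlib Require Import Reals Arith List Permutation ClassicalEpsilon.
Open Scope R_scope.

Definition gamma_seq (x : R) (n : nat) : R :=
  INR (fact n) * Rpower (INR n) x / prod_f_R0 (fun j => x + INR j) n.

Definition Gamma (x : R) : R :=
  epsilon (inhabits 0) (fun l => Un_cv (gamma_seq x) l).

(* Rising factorial x_(beta) = Gamma(x+beta)/Gamma(x),
   with convention 0_(0) = 1 and 0_(beta) = 0 for beta <> 0
   (only used with beta a positive integer). *)
Definition rising (x beta : R) : R :=
  if Req_EM_T x 0 then (if Req_EM_T beta 0 then 1 else 0)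
  else Gamma (x + beta) / Gamma x.

Definition sfamily (S : Type) := list ((S -> Prop) * nat).

Definition sum_mu {S : Type} (mu : (S -> Prop) -> R) (L : sfamily S) : R :=
  fold_right (fun p acc => mu (fst p) + acc) 0 L.

Definition sum_n {S : Type} (L : sfamily S) : R :=
  fold_right (fun p acc => INR (snd p) + acc) 0 L.

Definition prod_factor {S : Type} (mu : (S -> Prop) -> R) (k : R) (L : sfamily S) : R :=
  fold_right (fun p acc => rising (k * mu (fst p)) (INR (snd p)) / INR (fact (snd p)) * acc) 1 L.

Definition P {S : Type} (mu : (S -> Prop) -> R) (a rho k : R) (L : sfamily S) : R :=
  rising rho (k * sum_mu mu L) * rising a (sum_n L)
  / rising (rho + a) (k * sum_mu mu L + sum_n L)
  * prod_factor mu k L.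

Definition disjoint {S : Type} (A B : S -> Prop) : Prop := forall x, ~ (A x /\ B x).

Definition admissible {S : Type} (mu : (S -> Prop) -> R) (L : sfamily S) : Prop :=
  (forall p, In p L -> 0 <= mu (fst p)) /\
  ForallOrdPairs (fun p q => disjoint (fst p) (fst q)) L.

(* Main.v *)
From Coquelicot Require Import Coquelicot.
From Stdlib Require Import Reals Arith List Permutation Lra Lia Psatz ClassicalEpsilon.
Require Import Defs.
Open Scope R_scope.

Fixpoint poch (z : R) (r : nat) : R :=
  match r with O => 1 | S r' => poch z r' * (z + INR r') end.

Lemma prod_poch z n : prod_f_R0 (fun j => z + INR j) n = poch z (S n).
Proof. induction n. simpl; ring. simpl prod_f_R0. rewrite IHn. reflexivity. Qed.

Lemma poch_pos z r : 0 < z -> 0 < poch z r.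
Proof. intro H; induction r; simpl. lra. apply Rmult_lt_0_compat; auto. pose proof (pos_INR r); lra. Qed.

Lemma poch_nonneg z r : 0 <= z -> 0 <= poch z r.
Proof. intro H; induction r; simpl. lra. apply Rmult_le_pos; auto. pose proof (pos_INR r); lra. Qed.

Lemma poch_shift z r : poch z (S r) = z * poch (z+1) r.
Proof. induction r. simpl; ring. change (poch z (S (S r))) with (poch z (S r) * (z + INR (S r))).
 rewrite IHr. change (poch (z+1) (S r)) with (poch (z+1) r * (z + 1 + INR r)). rewrite S_INR. ring. Qed.

Lemma poch_mono z w r : 0 < z <= w -> poch z r <= poch w r.
Proof. intros H; induction r; simpl. lra. pose proof (pos_INR r).
 apply Rmult_le_compat; try lra. apply poch_nonneg; lra. Qed.

Lemma poch_0 r : poch 0 (S r) = 0.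
Proof. rewrite poch_shift. ring. Qed.

Lemma exp_le_mono a b : a <= b -> exp a <= exp b.
Proof. intros [H|H]. left; apply exp_increasing; auto. subst; lra. Qed.

Lemma ln_le_exp a b : 0 < a -> a <= exp b -> ln a <= b.
Proof. intros Ha [H|H]. left. rewrite <- (ln_exp b). apply ln_increasing; auto.
 subst. rewrite ln_exp. lra. Qed.

Lemma exp_ge_ln a b : 0 < a -> exp b <= a -> b <= ln a.
Proof. intros Ha [H|H]. left. rewrite <- (ln_exp b). apply ln_increasing; auto. apply exp_pos.
 subst. rewrite ln_exp. lra. Qed.

Lemma Rpower_1_l x : Rpower 1 x = 1.
Proof. unfold Rpower. rewrite ln_1, Rmult_0_r, exp_0. reflexivity. Qed.

Lemma exp_frac_le u : 0 <= u -> exp (u/(1+u)) <= 1 + u.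
Proof. intro Hu. pose proof (exp_ineq1_le (- (u/(1+u)))).
 assert (E: exp (u/(1+u)) * exp (- (u/(1+u))) = 1).
 { rewrite <- exp_plus. replace (u / (1 + u) + - (u / (1 + u))) with 0 by ring. apply exp_0. }
 assert (1 + - (u/(1+u)) = / (1+u)) by (field; lra).
 rewrite H0 in H. pose proof (exp_pos (u/(1+u))).
 assert (0 < /(1+u)) by (apply Rinv_0_lt_compat; lra).
 apply Rmult_le_reg_r with (/(1+u)); auto. rewrite Rinv_r by lra.
 apply Rle_trans with (exp (u/(1+u)) * exp (- (u/(1+u)))); [apply Rmult_le_compat_l; lra | lra]. Qed.

Lemma ln_up j : 0 < j -> ln ((j+1)/j) <= 1/j.
Proof. intro Hj. apply ln_le_exp. apply Rdiv_lt_0_compat; lra.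
 pose proof (exp_ineq1_le (1/j)). replace ((j+1)/j) with (1 + 1/j) by (field; lra). lra. Qed.

Lemma ln_low j : 0 < j -> 1/(j+1) <= ln ((j+1)/j).
Proof. intro Hj. apply exp_ge_ln. apply Rdiv_lt_0_compat; lra.
 pose proof (exp_frac_le (1/j)). replace (1/j/(1+1/j)) with (1/(j+1)) in H by (field; lra).
 replace ((j+1)/j) with (1 + 1/j) by (field; lra). apply H. left; apply Rdiv_lt_0_compat; lra. Qed.

Lemma K1 x t : 0 < x <= 1 -> 1 <= t -> Rpower ((t+2)/(t+1)) x <= 1 + x/t.
Proof. intros Hx Ht. unfold Rpower.
 pose proof (ln_up (t+1) ltac:(lra)). replace (t+1+1) with (t+2) in H by ring.
 apply Rle_trans with (exp (x/(t+x))).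
 apply exp_le_mono. apply Rle_trans with (x * (1/(t+1))). apply Rmult_le_compat_l; lra.
 unfold Rdiv. rewrite Rmult_1_l. apply Rmult_le_compat_l. lra. apply Rinv_le_contravar; lra.
 pose proof (exp_frac_le (x/t) ltac:(left; apply Rdiv_lt_0_compat; lra)).
 replace (x/t/(1+x/t)) with (x/(t+x)) in H0 by (field; lra). exact H0. Qed.

Lemma K2 x t : 0 < x -> 0 < t -> 1 + x/(t+1) <= Rpower ((t+1)/t) x.
Proof. intros Hx Ht. unfold Rpower. eapply Rle_trans; [| apply exp_ineq1_le].
 pose proof (ln_low t Ht). assert (x * (1/(t+1)) <= x * ln ((t+1)/t)) by (apply Rmult_le_compat_l; lra).
 unfold Rdiv in *. lra. Qed.

Lemma nat_big r : exists N, forall n, (N <= n)%nat -> r < INR n.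
Proof. destruct (proj2 (is_lim_seq_spec INR p_infty) is_lim_seq_INR r) as [N HN]. exists N; auto. Qed.

Lemma gseq_eq x n : gamma_seq x n = INR (fact n) * Rpower (INR n) x / poch x (S n).
Proof. unfold gamma_seq. rewrite prod_poch. reflexivity. Qed.

Lemma INR_fact_pos n : 0 < INR (fact n).
Proof. apply lt_0_INR. apply lt_O_fact. Qed.

Lemma INR_fact_S n : INR (fact (S n)) = (INR n + 1) * INR (fact n).
Proof. rewrite fact_simpl, mult_INR, S_INR. reflexivity. Qed.

Lemma lowQ x n : 0 < x <= 1 -> INR (fact n) * Rpower ((INR n + 2)/2) x <= poch (x+1) n.
Proof. intro Hx. induction n.
 - simpl. replace ((0+2)/2) with 1 by field. rewrite Rpower_1_l. lra.
 - change (poch (x+1) (S n)) with (poch (x+1) n * (x + 1 + INR n)).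
   rewrite INR_fact_S, S_INR.
   pose proof (pos_INR n).
   assert (E: Rpower ((INR n + 1 + 2)/2) x = Rpower ((INR n + 2)/2) x * Rpower ((INR n+1+2)/(INR n+1+1)) x).
   { rewrite Rpower_mult_distr. f_equal. field. lra. apply Rdiv_lt_0_compat; lra. apply Rdiv_lt_0_compat; lra. }
   rewrite E. pose proof (K1 x (INR n + 1) Hx ltac:(lra)).
   pose proof (INR_fact_pos n).
   assert (0 < Rpower ((INR n + 2)/2) x) by (unfold Rpower; apply exp_pos).
   set (F := INR (fact n)) in *. set (R2 := Rpower ((INR n + 2)/2) x) in *.
   set (R3 := Rpower ((INR n + 1 + 2) / (INR n + 1 + 1)) x) in *.
   assert ((INR n + 1) * R3 <= INR n + 1 + x).
   { apply Rle_trans with ((INR n + 1) * (1 + x/(INR n + 1))). apply Rmult_le_compat_l; lra.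
     right; field; lra. }
   apply Rle_trans with (F * R2 * (INR n + 1 + x)).
   + assert (0 < F*R2) by (apply Rmult_lt_0_compat; auto).
     replace ((INR n + 1) * F * (R2 * R3)) with ((F*R2) * ((INR n+1)*R3)) by ring.
     apply Rmult_le_compat_l; lra.
   + apply Rmult_le_compat; try lra. apply Rmult_le_pos; lra. Qed.

Lemma g_ub x n : 0 < x <= 1 -> gamma_seq x (S n) <= Rpower 2 x / x.
Proof. intro Hx. rewrite gseq_eq, poch_shift. pose proof (lowQ x (S n) Hx).
 pose proof (INR_fact_pos (S n)). set (t := INR (S n)) in *.
 assert (0 < t) by (apply lt_0_INR; lia).
 assert (0 < Rpower ((t+2)/2) x) by (unfold Rpower; apply exp_pos).
 assert (Rpower t x <= Rpower 2 x * Rpower ((t+2)/2) x).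
 { rewrite Rpower_mult_distr by (try lra; apply Rdiv_lt_0_compat; lra). apply Rle_Rpower_l; lra. }
 set (F := INR (fact (S n))) in *. set (P := poch (x+1) (S n)) in *.
 set (R2 := Rpower ((t+2)/2) x) in *.
 assert (0 < F * R2) by (apply Rmult_lt_0_compat; lra).
 assert (0 < P) by lra.
 apply Rle_trans with (F * (Rpower 2 x * R2) / (x * P)).
 - unfold Rdiv. apply Rmult_le_compat_r. left; apply Rinv_0_lt_compat; apply Rmult_lt_0_compat; lra.
   apply Rmult_le_compat_l; lra.
 - apply Rmult_le_reg_r with (x * P). apply Rmult_lt_0_compat; lra.
   unfold Rdiv. rewrite Rmult_assoc, Rinv_l, Rmult_1_r by (apply Rgt_not_eq, Rmult_lt_0_compat; lra).
   replace (Rpower 2 x * / x * (x * P)) with (Rpower 2 x * P) by (field; lra).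
   assert (0 <= Rpower 2 x) by (left; unfold Rpower; apply exp_pos).
   replace (F * (Rpower 2 x * R2)) with (Rpower 2 x * (F * R2)) by ring.
   apply Rmult_le_compat_l; lra. Qed.

Lemma g_grow x n : 0 < x -> gamma_seq x (S n) <= gamma_seq x (S (S n)).
Proof. intro Hx. rewrite !gseq_eq.
 change (poch x (S (S (S n)))) with (poch x (S (S n)) * (x + INR (S (S n)))).
 rewrite (INR_fact_S (S n)). rewrite (S_INR (S n)).
 set (t := INR (S n)). assert (0 < t) by (apply lt_0_INR; lia).
 pose proof (K2 x t Hx H).
 assert (E: Rpower (t+1) x = Rpower t x * Rpower ((t+1)/t) x).
 { rewrite Rpower_mult_distr. f_equal. field. lra. lra. apply Rdiv_lt_0_compat; lra. }
 rewrite E. pose proof (INR_fact_pos (S n)). pose proof (poch_pos x (S (S n)) Hx).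
 assert (0 < Rpower t x) by (unfold Rpower; apply exp_pos).
 set (F := INR (fact (S n))) in *. set (P := poch x (S (S n))) in *.
 set (R1 := Rpower t x) in *. set (R' := Rpower ((t+1)/t) x) in *.
 assert (t + 1 + x <= (t+1) * R').
 { apply Rle_trans with ((t+1) * (1 + x/(t+1))). right; field; lra. apply Rmult_le_compat_l; lra. }
 apply Rmult_le_reg_r with (P * (x+t+1)). apply Rmult_lt_0_compat; lra.
 replace (F * R1 / P * (P * (x + t + 1))) with (F * R1 * (t+1+x)) by (field; lra).
 replace ((t + 1) * F * (R1 * R') / (P * (x + (t + 1))) * (P * (x + t + 1))) with (F*R1*((t+1)*R')) by (field; lra).
 apply Rmult_le_compat_l. apply Rmult_le_pos; lra. lra. Qed.

Lemma Un_cv_shift u l : Un_cv (fun n => u (S n)) l -> Un_cv u l.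
Proof. intros H eps He. destruct (H eps He) as [N HN]. exists (S N). intros n Hn.
 destruct n. lia. apply HN. lia. Qed.

Lemma g_pos x n : 0 < x -> 0 < gamma_seq x n.
Proof. intro Hx. rewrite gseq_eq. apply Rdiv_lt_0_compat. apply Rmult_lt_0_compat.
 apply INR_fact_pos. unfold Rpower; apply exp_pos. apply poch_pos; auto. Qed.

Lemma g_base x : 0 < x <= 1 -> exists l, 0 < l /\ Un_cv (gamma_seq x) l.
Proof. intro Hx. assert (Hg : Un_growing (fun n => gamma_seq x (S n))).
 { intro n. apply g_grow; lra. }
 assert (Hb : has_ub (fun n => gamma_seq x (S n))).
 { exists (Rpower 2 x / x). intros y [n Hn]. subst. apply g_ub; auto. }
 destruct (growing_cv _ Hg Hb) as [l Hl]. exists l. split.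
 - pose proof (growing_ineq _ _ Hg Hl 0%nat). simpl in H.
   apply Rlt_le_trans with (2 := H). apply g_pos; lra.
 - apply Un_cv_shift; auto. Qed.

Lemma g_rec_seq x n : 0 < x -> gamma_seq (x+1) (S n) = gamma_seq x (S n) * (x * INR (S n) / (x + INR (S n) + 1)).
Proof. intro Hx. rewrite !gseq_eq. rewrite Rpower_plus. rewrite Rpower_1 by (apply lt_0_INR; lia).
 rewrite (poch_shift x (S n)).
 change (poch (x+1) (S (S n))) with (poch (x+1) (S n) * (x + 1 + INR (S n))).
 pose proof (poch_pos (x+1) (S n) ltac:(lra)). pose proof (pos_INR (S n)).
 field. split; lra. Qed.

Lemma frac_cv x : 0 < x -> Un_cv (fun n => x * INR (S n) / (x + INR (S n) + 1)) x.
Proof. intro Hx. intros eps He.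
 destruct (nat_big (x*(x+1)/eps)) as [N HN]. exists N. intros n Hn.
 specialize (HN (S n) ltac:(lia)). unfold Rdist. pose proof (pos_INR (S n)).
 set (t := INR (S n)) in *.
 replace (x * t / (x + t + 1) - x) with (- (x*(x+1)/(x+t+1))) by (field; lra).
 rewrite Rabs_Ropp, Rabs_right. 2: { left. apply Rdiv_lt_0_compat; nra. }
 apply Rmult_lt_reg_r with (x+t+1). lra. unfold Rdiv. rewrite Rmult_assoc, Rinv_l, Rmult_1_r by lra.
 assert (x*(x+1) < eps * t).
 { apply Rmult_lt_reg_r with (/eps). apply Rinv_0_lt_compat; lra.
   replace (eps*t*/eps) with t by (field; lra). exact HN. }
 nra. Qed.

Lemma g_step x : 0 < x -> (exists l, 0 < l /\ Un_cv (gamma_seq x) l) ->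
  exists l, 0 < l /\ Un_cv (gamma_seq (x+1)) l.
Proof. intros Hx [l [Hl Hc]]. exists (l * x). split. nra.
 apply Un_cv_shift. intros eps He.
 assert (H: Un_cv (fun n => gamma_seq x (S n) * (x * INR (S n) / (x + INR (S n) + 1))) (l*x)).
 { apply CV_mult. intros e He'. destruct (Hc e He') as [N HN]. exists N. intros; apply HN; lia.
   apply frac_cv; auto. }
 destruct (H eps He) as [N HN]. exists N. intros n Hn. rewrite g_rec_seq by auto. apply HN; auto. Qed.

Lemma g_exists x : 0 < x -> exists l, 0 < l /\ Un_cv (gamma_seq x) l.
Proof. intro Hx. destruct (nat_big x) as [N HN]. specialize (HN N (Nat.le_refl _)).
 revert x Hx HN. induction N; intros x Hx HN.
 - simpl in HN. lra.
 - destruct (Rle_lt_dec x 1). apply g_base; lra.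
   replace x with ((x-1)+1) by ring. apply g_step. lra. apply IHN. lra. rewrite S_INR in HN. lra. Qed.

Lemma Gamma_spec x : 0 < x -> Un_cv (gamma_seq x) (Gamma x) /\ 0 < Gamma x.
Proof. intro Hx. destruct (g_exists x Hx) as [l [Hl Hc]].
 assert (Un_cv (gamma_seq x) (Gamma x)).
 { unfold Gamma. apply (epsilon_spec (inhabits 0) (fun l => Un_cv (gamma_seq x) l)). exists l; auto. }
 split; auto. rewrite (UL_sequence _ _ _ H Hc). auto. Qed.

Lemma Gamma_rec x : 0 < x -> Gamma (x+1) = x * Gamma x.
Proof. intro Hx. destruct (Gamma_spec x Hx) as [H1 _]. destruct (Gamma_spec (x+1) ltac:(lra)) as [H2 _].
 apply UL_sequence with (gamma_seq (x+1)); auto.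
 apply Un_cv_shift. intros eps He.
 assert (H: Un_cv (fun n => gamma_seq x (S n) * (x * INR (S n) / (x + INR (S n) + 1))) (Gamma x * x)).
 { apply CV_mult. intros e He'. destruct (H1 e He') as [N HN]. exists N. intros; apply HN; lia.
   apply frac_cv; auto. }
 destruct (H eps He) as [N HN]. exists N. intros n Hn. rewrite g_rec_seq by auto. replace (x * Gamma x) with (Gamma x * x) by ring. apply HN; auto. Qed.

Lemma Gamma_poch x r : 0 < x -> Gamma (x + INR r) = Gamma x * poch x r.
Proof. intro Hx. induction r. simpl. rewrite Rplus_0_r; ring.
 rewrite S_INR. replace (x + (INR r + 1)) with ((x + INR r) + 1) by ring.
 rewrite Gamma_rec by (pose proof (pos_INR r); lra). rewrite IHr. simpl. ring. Qed.

Lemma rising_pos z b : 0 < z -> rising z b = Gamma (z+b) / Gamma z.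
Proof. intro Hz. unfold rising. destruct (Req_EM_T z 0). lra. reflexivity. Qed.

Lemma rising_nat z r : 0 <= z -> rising z (INR r) = poch z r.
Proof. intro Hz. destruct (Req_EM_T z 0).
 - subst. unfold rising. destruct (Req_EM_T 0 0); [|lra]. destruct r. simpl. destruct (Req_EM_T 0 0); lra.
   rewrite poch_0. destruct (Req_EM_T (INR (S r)) 0). pose proof (lt_0_INR (S r) ltac:(lia)). lra. auto.
 - rewrite rising_pos by lra. rewrite Gamma_poch by lra. destruct (Gamma_spec z ltac:(lra)). field; lra. Qed.

Definition T (y m c : R) (r : nat) : R := poch y r * poch m r / (poch c r * INR (fact r)).
Definition Ssum y m c R := sum_f_R0 (T y m c) R.

Lemma T_pos y m c r : 0 < y -> 0 < m -> 0 < c -> 0 < T y m c r.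
Proof. intros. unfold T. apply Rdiv_lt_0_compat. apply Rmult_lt_0_compat; apply poch_pos; auto.
 apply Rmult_lt_0_compat. apply poch_pos; auto. apply INR_fact_pos. Qed.

Lemma T_0 y m c : T y m c 0 = 1.
Proof. unfold T. simpl. field. Qed.

Lemma T_S y m c r : 0 < c ->
  T y m c (S r) = T y m c r * ((y + INR r) * (m + INR r) / ((c + INR r) * (INR r + 1))).
Proof. intro Hc. unfold T. simpl poch. rewrite INR_fact_S.
 pose proof (poch_pos c r Hc). pose proof (INR_fact_pos r). pose proof (pos_INR r).
 field. repeat split; lra. Qed.

Lemma T_shift y m c r : 0 < c -> T y m (c+1) r = T y m c r * (c / (c + INR r)).
Proof. intro Hc. unfold T. pose proof (poch_shift c r). simpl poch in H.
 pose proof (poch_pos c r Hc). pose proof (poch_pos (c+1) r ltac:(lra)). pose proof (INR_fact_pos r). pose proof (pos_INR r).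
 assert (poch (c+1) r = poch c r * (c + INR r) / c) by (apply Rmult_eq_reg_l with c; [|lra]; rewrite <- H; field; lra).
 rewrite H4. field. repeat split; lra. Qed.

Lemma T_mono y m c n r : 0 < y -> 0 < m -> 0 < c -> T y m (c + INR n) r <= T y m c r.
Proof. intros. unfold T. pose proof (pos_INR n).
 pose proof (poch_mono c (c+INR n) r ltac:(lra)). pose proof (poch_pos c r H1).
 pose proof (INR_fact_pos r). pose proof (poch_pos y r H). pose proof (poch_pos m r H0).
 unfold Rdiv. apply Rmult_le_compat_l. nra. apply Rinv_le_contravar; nra. Qed.

Lemma T_le_shift y m c n r : 0 < y -> 0 < m -> 0 < c ->
  T y m (c + INR n) (S r) <= c / (c + INR n) * T y m c (S r).
Proof. intros. unfold T. pose proof (pos_INR n).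
 rewrite (poch_shift c r), (poch_shift (c + INR n) r).
 pose proof (poch_mono (c+1) (c+INR n+1) r ltac:(lra)). pose proof (poch_pos (c+1) r ltac:(lra)).
 pose proof (INR_fact_pos (S r)). pose proof (poch_pos y (S r) H). pose proof (poch_pos m (S r) H0).
 set (A := poch y (S r) * poch m (S r)) in *. assert (0 < A) by (unfold A; nra).
 set (F := INR (fact (S r))) in *.
 apply Rle_trans with (A / ((c + INR n) * poch (c+1) r * F)).
 - unfold Rdiv. apply Rmult_le_compat_l. lra. apply Rinv_le_contravar.
   apply Rmult_lt_0_compat; [apply Rmult_lt_0_compat|]; lra.
   apply Rmult_le_compat_r. lra. apply Rmult_le_compat_l; lra.
 - right. field. repeat split; lra. Qed.

Lemma telescope y m c Q_ : 0 < c ->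
  c * (c - y - m) * Ssum y m c Q_ - (c - y) * (c - m) * Ssum y m (c+1) Q_
  = - c * (INR Q_ + 1) * T y m c (S Q_).
Proof. intro Hc. unfold Ssum. induction Q_.
 - simpl sum_f_R0. rewrite !T_0. rewrite T_S by auto. rewrite T_0. simpl INR. field. lra.
 - simpl sum_f_R0. rewrite (T_shift y m c (S Q_) Hc).
   rewrite (T_S y m c (S Q_) Hc).
   pose proof (pos_INR (S Q_)). rewrite S_INR in *.
   set (t := T y m c (S Q_)) in *.
   replace (c * (c - y - m) * (sum_f_R0 (T y m c) Q_ + t) -
     (c - y) * (c - m) * (sum_f_R0 (T y m (c + 1)) Q_ + t * (c / (c + (INR Q_ + 1)))))
   with ((c * (c - y - m) * sum_f_R0 (T y m c) Q_ - (c - y) * (c - m) * sum_f_R0 (T y m (c + 1)) Q_)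
     + (c * (c - y - m) * t - (c - y) * (c - m) * (t * (c / (c + (INR Q_ + 1)))))) by ring.
   rewrite IHQ_. field. lra. Qed.

Lemma Ssum_S y m c Q_ : Ssum y m c (S Q_) = Ssum y m c Q_ + T y m c (S Q_).
Proof. reflexivity. Qed.

Lemma Ssum_mono y m c Q_ k : 0 < y -> 0 < m -> 0 < c -> Ssum y m c Q_ <= Ssum y m c (Q_ + k).
Proof. intros. induction k. rewrite Nat.add_0_r; lra. rewrite Nat.add_succ_r, Ssum_S.
 pose proof (T_pos y m c (S (Q_+k)) H H0 H1). lra. Qed.

Lemma Ssum_ge1 y m c Q_ : 0 < y -> 0 < m -> 0 < c -> 1 <= Ssum y m c Q_.
Proof. intros. pose proof (Ssum_mono y m c 0 Q_ H H0 H1). unfold Ssum in H2 at 1. simpl in H2.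
 rewrite T_0 in H2. exact H2. Qed.

Lemma Ssum_bound y m c : 0 < y -> 0 < m -> 0 < c - y - m -> exists B, 1 <= B /\ forall Q_, Ssum y m c Q_ <= B.
Proof. intros Hy Hm Hx. set (x := c - y - m) in *. assert (Hc: 0 < c) by (unfold x in Hx; lra).
 destruct (nat_big ((2*y*m + x*c)/x)) as [r0 Hr0].
 set (W := fun Q_ => Ssum y m c (r0 + Q_) + (2/x) * (INR (r0+Q_) + 1) * T y m c (S (r0+Q_))).
 assert (HW: forall Q_, W (S Q_) <= W Q_).
 { intro Q_. unfold W. rewrite Nat.add_succ_r, Ssum_S.
   rewrite (T_S y m c (S (r0+Q_)) Hc). rewrite S_INR.
   pose proof (T_pos y m c (S (r0+Q_)) Hy Hm Hc).
   set (t := T y m c (S (r0+Q_))) in *. set (r := INR (r0+Q_)) in *.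
   assert (Hr: (2*y*m + x*c)/x < r + 1).
   { specialize (Hr0 (S (r0+Q_)) ltac:(lia)). rewrite S_INR in Hr0. exact Hr0. }
   assert (2*y*m + x*c < x * (r+1)).
   { apply Rmult_lt_reg_r with (/x). apply Rinv_0_lt_compat; lra.
     replace (x*(r+1)*/x) with (r+1) by (field; lra). exact Hr. }
   pose proof (pos_INR (r0+Q_)). fold r in H1.
   assert (E: (2 / x) * (r + 1 + 1) * (t * ((y + (r + 1)) * (m + (r + 1)) / ((c + (r + 1)) * (r + 1 + 1))))
     = (2/x) * (r+1) * t - (2/x) * t * ((r+1) * x - y*m)/(c + (r+1))).
   { unfold x. field. repeat split; try lra. unfold x in Hx; lra. }
   rewrite E.
   assert (t <= (2/x) * t * ((r+1) * x - y*m)/(c + (r+1))).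
   { apply Rmult_le_reg_r with ((c + (r+1)) * x). apply Rmult_lt_0_compat; lra.
     replace (2 / x * t * ((r + 1) * x - y * m) / (c + (r + 1)) * ((c + (r + 1)) * x))
       with (2 * t * ((r + 1) * x - y * m)) by (field; lra).
     nra. }
   lra. }
 assert (HW0: forall Q_, W Q_ <= W 0%nat).
 { induction Q_. lra. specialize (HW Q_). lra. }
 exists (Rmax 1 (W 0%nat)). split. apply Rmax_l.
 intro Q_. eapply Rle_trans. apply (Ssum_mono y m c Q_ r0 Hy Hm Hc).
 eapply Rle_trans; [|apply Rmax_r]. eapply Rle_trans; [|apply (HW0 Q_)].
 unfold W. rewrite Nat.add_comm.
 pose proof (T_pos y m c (S (r0+Q_)) Hy Hm Hc). pose proof (pos_INR (r0+Q_)).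
 assert (0 <= 2/x * (INR (r0 + Q_) + 1) * T y m c (S (r0 + Q_))).
 { apply Rmult_le_pos. apply Rmult_le_pos. left; apply Rdiv_lt_0_compat; lra. lra. lra. }
 lra. Qed.

Lemma Rpower_pos a b : 0 < Rpower a b.
Proof. unfold Rpower; apply exp_pos. Qed.

Lemma Rpower_decay x : 0 < x -> Un_cv (fun n => Rpower (INR n) (-x)) 0.
Proof. intros Hx eps He. destruct (nat_big (exp (- ln eps / x))) as [N HN]. exists N.
 intros n Hn. specialize (HN n Hn). unfold Rdist. rewrite Rminus_0_r, Rabs_right by (left; apply Rpower_pos).
 pose proof (exp_pos (- ln eps / x)).
 assert (ln (exp (- ln eps / x)) < ln (INR n)) by (apply ln_increasing; lra).
 rewrite ln_exp in H0. unfold Rpower. rewrite <- (exp_ln eps He). apply exp_increasing.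
 assert (- ln eps < x * ln (INR n)).
 { apply Rmult_lt_reg_r with (/x). apply Rinv_0_lt_compat; lra.
   replace (x * ln (INR n) * / x) with (ln (INR n)) by (field; lra). exact H0. }
 lra. Qed.

Lemma uT_eq y m c n : 0 < y -> 0 < m -> 0 < c -> (1 <= n)%nat ->
  (INR n + 1) * T y m c (S n) = Rpower (INR n) (-(c-y-m)) * gamma_seq c n / (gamma_seq y n * gamma_seq m n).
Proof. intros Hy Hm Hc Hn. rewrite !gseq_eq. unfold T. rewrite INR_fact_S.
 assert (E: Rpower (INR n) (-(c-y-m)) * Rpower (INR n) c = Rpower (INR n) y * Rpower (INR n) m).
 { rewrite <- !Rpower_plus. f_equal. ring. }
 pose proof (poch_pos y (S n) Hy). pose proof (poch_pos m (S n) Hm). pose proof (poch_pos c (S n) Hc).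
 pose proof (INR_fact_pos n). pose proof (pos_INR n).
 pose proof (Rpower_pos (INR n) y). pose proof (Rpower_pos (INR n) m). pose proof (Rpower_pos (INR n) c).
 pose proof (Rpower_pos (INR n) (-(c-y-m))).
 set (Rx := Rpower (INR n) (-(c-y-m))) in *. set (Rc := Rpower (INR n) c) in *.
 set (Ry := Rpower (INR n) y) in *. set (Rm := Rpower (INR n) m) in *.
 set (F := INR (fact n)) in *.
 replace (Rx * (F * Rc / poch c (S n)) / (F * Ry / poch y (S n) * (F * Rm / poch m (S n))))
   with ((Rx * Rc) * poch y (S n) * poch m (S n) / (F * Ry * Rm * poch c (S n))) by (field; repeat split; lra).
 rewrite E. field. repeat split; lra. Qed.

Lemma uT_lim y m c : 0 < y -> 0 < m -> 0 < c - y - m ->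
  Un_cv (fun n => (INR n + 1) * T y m c (S n)) 0.
Proof. intros Hy Hm Hx. assert (Hc : 0 < c) by lra.
 destruct (Gamma_spec c Hc) as [Gc Gcp]. destruct (Gamma_spec y Hy) as [Gy Gyp].
 destruct (Gamma_spec m Hm) as [Gm Gmp].
 apply is_lim_seq_Reals.
 apply is_lim_seq_ext_loc with (fun n => Rpower (INR n) (-(c-y-m)) * gamma_seq c n / (gamma_seq y n * gamma_seq m n)).
 { exists 1%nat. intros n Hn. symmetry. apply uT_eq; auto. }
 replace (Finite 0) with (Finite (0 * Gamma c / (Gamma y * Gamma m))) by (f_equal; field; lra).
 apply is_lim_seq_div'. apply is_lim_seq_mult'. apply is_lim_seq_Reals. apply Rpower_decay. lra.
 apply is_lim_seq_Reals; auto. apply is_lim_seq_mult'; apply is_lim_seq_Reals; auto.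
 apply Rgt_not_eq. apply Rmult_lt_0_compat; auto. Qed.

Definition Pp y m c n := poch (c-y) n * poch (c-m) n / (poch c n * poch (c-y-m) n).

Lemma Pp_S y m c n : 0 < c - y - m -> 0 < y -> 0 < m ->
  Pp y m c (S n) = Pp y m c n * ((c - y + INR n) * (c - m + INR n) / ((c + INR n) * (c - y - m + INR n))).
Proof. intros. unfold Pp. simpl poch. pose proof (pos_INR n).
 pose proof (poch_pos c n ltac:(lra)). pose proof (poch_pos (c-y-m) n ltac:(lra)).
 field. repeat split; lra. Qed.

Lemma Pp_nonneg y m c n : 0 < c - y - m -> 0 < y -> 0 < m -> 0 <= Pp y m c n.
Proof. intros. unfold Pp. apply Rmult_le_pos. apply Rmult_le_pos; apply poch_nonneg; lra.
 left. apply Rinv_0_lt_compat. apply Rmult_lt_0_compat; apply poch_pos; lra. Qed.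

Lemma Pp_lim y m c : 0 < c - y - m -> 0 < y -> 0 < m ->
  Un_cv (fun n => Pp y m c (S n)) (Gamma c * Gamma (c-y-m) / (Gamma (c-y) * Gamma (c-m))).
Proof. intros Hx Hy Hm.
 destruct (Gamma_spec c ltac:(lra)) as [G1 G1p]. destruct (Gamma_spec (c-y-m) ltac:(lra)) as [G2 G2p].
 destruct (Gamma_spec (c-y) ltac:(lra)) as [G3 G3p]. destruct (Gamma_spec (c-m) ltac:(lra)) as [G4 G4p].
 apply is_lim_seq_Reals.
 apply is_lim_seq_ext with (fun n => gamma_seq c n * gamma_seq (c-y-m) n / (gamma_seq (c-y) n * gamma_seq (c-m) n)).
 { intro n. rewrite !gseq_eq. unfold Pp.
   assert (E: Rpower (INR n) c * Rpower (INR n) (c-y-m) = Rpower (INR n) (c-y) * Rpower (INR n) (c-m)).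
   { rewrite <- !Rpower_plus. f_equal. ring. }
   pose proof (poch_pos c (S n) ltac:(lra)). pose proof (poch_pos (c-y-m) (S n) ltac:(lra)).
   pose proof (poch_pos (c-y) (S n) ltac:(lra)). pose proof (poch_pos (c-m) (S n) ltac:(lra)).
   pose proof (INR_fact_pos n).
   pose proof (Rpower_pos (INR n) c). pose proof (Rpower_pos (INR n) (c-y-m)).
   pose proof (Rpower_pos (INR n) (c-y)). pose proof (Rpower_pos (INR n) (c-m)).
   set (F := INR (fact n)) in *.
   replace (F * Rpower (INR n) c / poch c (S n) * (F * Rpower (INR n) (c - y - m) / poch (c - y - m) (S n)) /
      (F * Rpower (INR n) (c - y) / poch (c - y) (S n) * (F * Rpower (INR n) (c - m) / poch (c - m) (S n))))
   with ((Rpower (INR n) c * Rpower (INR n) (c-y-m)) * poch (c - y) (S n) * poch (c - m) (S n) /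
      (Rpower (INR n) (c - y) * Rpower (INR n) (c - m) * poch c (S n) * poch (c-y-m) (S n))) by (field; repeat split; lra).
   rewrite E. field. repeat split; lra. }
 apply is_lim_seq_div'. apply is_lim_seq_mult'; apply is_lim_seq_Reals; auto.
 apply is_lim_seq_mult'; apply is_lim_seq_Reals; auto.
 apply Rgt_not_eq. apply Rmult_lt_0_compat; auto. Qed.

Lemma step_eq y m c N : 0 < y -> 0 < m -> 0 < c - y - m ->
  Ssum y m c N = ((c - y) * (c - m) / (c * (c - y - m))) * Ssum y m (c+1) N
     - (INR N + 1) * T y m c (S N) / (c - y - m).
Proof. intros. pose proof (telescope y m c N ltac:(lra)).
 set (A := Ssum y m c N) in *. set (B := Ssum y m (c+1) N) in *.
 set (t := (INR N + 1) * T y m c (S N)).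
 assert (E: c * (c-y-m) * A = (c - y) * (c - m) * B - c * t) by (unfold t; lra).
 apply Rmult_eq_reg_l with (c * (c - y - m)). 2: { apply Rgt_not_eq, Rmult_lt_0_compat; lra. }
 rewrite E. field. lra. Qed.

Lemma iter_bound y m c n : 0 < y -> 0 < m -> 0 < c - y - m ->
  exists K, 0 <= K /\ forall N,
    Pp y m c n * Ssum y m (c + INR n) N - K * ((INR N + 1) * T y m c (S N)) <= Ssum y m c N
    /\ Ssum y m c N <= Pp y m c n * Ssum y m (c + INR n) N.
Proof. intros Hy Hm Hx. induction n.
 - exists 0. split. lra. intro N. unfold Pp. simpl. rewrite Rplus_0_r. split; lra.
 - destruct IHn as [K [HK H]]. pose proof (pos_INR n).
   set (c' := c + INR n) in *.
   exists (Pp y m c n / (c' - y - m) + K). split.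
   { apply Rplus_le_le_0_compat; auto. apply Rmult_le_pos. apply Pp_nonneg; auto. left; apply Rinv_0_lt_compat; unfold c'; lra. }
   intro N. specialize (H N). destruct H as [H1 H2].
   replace (c + INR (S n)) with (c' + 1) by (unfold c'; rewrite S_INR; ring).
   rewrite Pp_S by auto.
   pose proof (step_eq y m c' N Hy Hm ltac:(unfold c'; lra)) as Hst.
   pose proof (T_pos y m c' (S N) Hy Hm ltac:(unfold c'; lra)).
   pose proof (T_mono y m c n (S N) Hy Hm ltac:(lra)) as HTm. fold c' in HTm.
   pose proof (pos_INR N). pose proof (Pp_nonneg y m c n Hx Hy Hm).
   replace ((c - y + INR n) * (c - m + INR n) / ((c + INR n) * (c - y - m + INR n)))
     with ((c' - y) * (c' - m) / (c' * (c' - y - m))) by (unfold c'; field; split; lra).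
   set (rho := (c' - y) * (c' - m) / (c' * (c' - y - m))) in *.
   set (S' := Ssum y m c' N) in *. set (S'' := Ssum y m (c'+1) N) in *.
   set (P := Pp y m c n) in *.
   set (d := (INR N + 1) * T y m c' (S N) / (c' - y - m)) in *.
   assert (0 <= d) by (unfold d; apply Rmult_le_pos; [apply Rmult_le_pos; lra|left; apply Rinv_0_lt_compat; unfold c'; lra]).
   assert (d <= (INR N + 1) * T y m c (S N) / (c' - y - m)).
   { unfold d, Rdiv. apply Rmult_le_compat_r. left; apply Rinv_0_lt_compat; unfold c'; lra.
     apply Rmult_le_compat_l. lra. exact HTm. }
   set (u := (INR N + 1) * T y m c (S N)) in *.
   assert (P * d <= P / (c' - y - m) * u).
   { replace (P / (c' - y - m) * u) with (P * (u / (c'-y-m))) by (field; unfold c'; lra).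
     apply Rmult_le_compat_l; lra. }
   rewrite Hst in H1, H2. split; nra. Qed.

Lemma Ssum_near y m c n N : 0 < y -> 0 < m -> 0 < c ->
  Ssum y m (c + INR n) N - 1 <= c / (c + INR n) * (Ssum y m c N - 1).
Proof. intros. pose proof (pos_INR n). induction N.
 - unfold Ssum; simpl. rewrite !T_0. right; field; lra.
 - rewrite !Ssum_S. pose proof (T_le_shift y m c n N H H0 H1).
   replace (c / (c + INR n) * (Ssum y m c N + T y m c (S N) - 1))
     with (c / (c + INR n) * (Ssum y m c N - 1) + c / (c + INR n) * T y m c (S N)) by ring.
   lra. Qed.

Theorem gauss y m c : 0 < y -> 0 < m -> 0 < c - y - m ->
  Un_cv (Ssum y m c) (Gamma c * Gamma (c-y-m) / (Gamma (c-y) * Gamma (c-m))).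
Proof. intros Hy Hm Hx. assert (Hc: 0 < c) by lra.
 set (Q := Gamma c * Gamma (c-y-m) / (Gamma (c-y) * Gamma (c-m))).
 assert (HQ: 0 < Q).
 { destruct (Gamma_spec c Hc). destruct (Gamma_spec (c-y-m) Hx). destruct (Gamma_spec (c-y) ltac:(lra)).
   destruct (Gamma_spec (c-m) ltac:(lra)). unfold Q. apply Rdiv_lt_0_compat; apply Rmult_lt_0_compat; auto. }
 destruct (Ssum_bound y m c Hy Hm Hx) as [B [HB1 HB]].
 intros eps He.
 destruct (Pp_lim y m c Hx Hy Hm (eps / (3 * (1+B))) ltac:(apply Rdiv_lt_0_compat; lra)) as [N1 HN1].
 destruct (nat_big (3 * c * Q * B / eps)) as [N2 HN2].
 set (n1 := max N1 N2). set (n := S n1).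
 assert (Hd: Rabs (Pp y m c n - Q) < eps / (3*(1+B))) by (apply (HN1 n1); unfold n1; lia).
 assert (Hn: 3 * c * Q * B / eps < INR n) by (apply HN2; unfold n, n1; lia).
 destruct (iter_bound y m c n Hy Hm Hx) as [K [HK Hit]].
 destruct (uT_lim y m c Hy Hm Hx (eps / (3 * (K+1))) ltac:(apply Rdiv_lt_0_compat; lra)) as [N3 HN3].
 exists N3. intros N HN. specialize (HN3 N HN). specialize (Hit N).
 unfold Rdist in *. rewrite Rminus_0_r in HN3.
 pose proof (pos_INR N). pose proof (T_pos y m c (S N) Hy Hm Hc).
 set (u := (INR N + 1) * T y m c (S N)) in *.
 assert (Hu: 0 <= u) by (unfold u; apply Rmult_le_pos; lra).
 rewrite Rabs_right in HN3 by lra.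
 assert (HKu: K * u <= eps/3).
 { apply Rle_trans with (K * (eps / (3 * (K+1)))). apply Rmult_le_compat_l; lra.
   apply Rmult_le_reg_r with (3*(K+1)). lra.
   replace (K * (eps / (3 * (K + 1))) * (3 * (K + 1))) with (K * eps) by (field; lra).
   replace (eps / 3 * (3 * (K + 1))) with (K*eps + eps) by field. lra. }
 pose proof (pos_INR n).
 pose proof (Ssum_near y m c n N Hy Hm Hc). pose proof (HB N).
 pose proof (Ssum_ge1 y m c N Hy Hm Hc). pose proof (Ssum_ge1 y m (c + INR n) N Hy Hm ltac:(lra)).
 set (S' := Ssum y m (c + INR n) N) in *. set (S0 := Ssum y m c N) in *.
 set (P := Pp y m c n) in *.
 assert (HS'1: S' - 1 <= c * B / (c + INR n)).
 { apply Rle_trans with (c / (c + INR n) * (S0 - 1)). auto.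
   unfold Rdiv. rewrite Rmult_comm. rewrite (Rmult_comm c B). rewrite Rmult_assoc.
   apply Rmult_le_compat. lra. left; apply Rmult_lt_0_compat; [lra| apply Rinv_0_lt_compat; lra]. lra. lra. }
 assert (HS'2: S' <= 1 + B).
 { assert (c * B / (c + INR n) <= B).
   { apply Rmult_le_reg_r with (c + INR n). lra. unfold Rdiv. rewrite Rmult_assoc, Rinv_l, Rmult_1_r by lra. nra. }
   lra. }
 assert (HQS: Q * (S' - 1) < eps / 3).
 { apply Rle_lt_trans with (Q * (c * B / (c + INR n))). apply Rmult_le_compat_l; lra.
   apply Rmult_lt_reg_r with ((c + INR n) * (3 / eps)). apply Rmult_lt_0_compat. lra. apply Rdiv_lt_0_compat; lra.
   replace (Q * (c * B / (c + INR n)) * ((c + INR n) * (3 / eps))) with (3 * c * Q * B / eps) by (field; lra).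
   replace (eps / 3 * ((c + INR n) * (3 / eps))) with (c + INR n) by (field; lra). lra. }
 apply Rabs_def2 in Hd. destruct Hd as [Hd1 Hd2].
 set (e1 := eps / (3 * (1 + B))) in *.
 assert (He1: e1 * (1+B) = eps/3) by (unfold e1; field; lra).
 assert (0 < e1) by (unfold e1; apply Rdiv_lt_0_compat; lra).
 assert (0 < (e1 - (P - Q)) * S') by (apply Rmult_lt_0_compat; lra).
 assert (0 < (e1 + (P - Q)) * S') by (apply Rmult_lt_0_compat; lra).
 assert (e1 * S' <= e1 * (1+B)) by (apply Rmult_le_compat_l; lra).
 assert (0 <= Q * (S' - 1)) by (apply Rmult_le_pos; lra).
 destruct Hit as [Hl Hr].
 apply Rabs_def1.
 - assert (P * S' - Q = (P - Q) * S' + Q * (S' - 1)) by ring. nra.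
 - assert (P * S' - Q = (P - Q) * S' + Q * (S' - 1)) by ring. nra.
Qed.

Lemma perm_sum_mu {Sx} (mu : (Sx -> Prop) -> R) L L' : Permutation L L' -> sum_mu mu L = sum_mu mu L'.
Proof. induction 1; simpl; auto. rewrite IHPermutation; auto. ring. congruence. Qed.
Lemma perm_sum_n {Sx} (L L' : sfamily Sx) : Permutation L L' -> sum_n L = sum_n L'.
Proof. induction 1; simpl; auto. rewrite IHPermutation; auto. ring. congruence. Qed.
Lemma perm_prod {Sx} (mu : (Sx -> Prop) -> R) k L L' : Permutation L L' -> prod_factor mu k L = prod_factor mu k L'.
Proof. induction 1; simpl; auto. rewrite IHPermutation; auto. ring. congruence. Qed.

Lemma sum_mu_app {Sx} (mu : (Sx -> Prop) -> R) L A r : sum_mu mu (L ++ (A, r) :: nil) = sum_mu mu L + mu A.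
Proof. induction L; simpl. ring. unfold sum_mu in *. simpl. rewrite IHL. ring. Qed.
Lemma sum_n_app {Sx} (L : sfamily Sx) A r : sum_n (L ++ (A, r) :: nil) = sum_n L + INR r.
Proof. induction L; simpl. ring. unfold sum_n in *. simpl. rewrite IHL. ring. Qed.
Lemma prod_app {Sx} (mu : (Sx -> Prop) -> R) k L A r :
  prod_factor mu k (L ++ (A, r) :: nil) = prod_factor mu k L * (rising (k * mu A) (INR r) / INR (fact r)).
Proof. induction L; simpl. ring. unfold prod_factor in *. simpl. rewrite IHL. ring. Qed.

Lemma sum_mu_nonneg {Sx} (mu : (Sx -> Prop) -> R) L : (forall p, In p L -> 0 <= mu (fst p)) -> 0 <= sum_mu mu L.
Proof. unfold sum_mu. induction L; simpl; intros. lra. pose proof (H a (or_introl eq_refl)).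
 pose proof (IHL (fun p Hp => H p (or_intror Hp))). lra. Qed.
Lemma sum_n_nonneg {Sx} (L : sfamily Sx) : 0 <= sum_n L.
Proof. unfold Defs.sum_n. induction L; simpl. lra. pose proof (pos_INR (snd a)). lra. Qed.

Lemma Un_cv_const_mult u l K : Un_cv u l -> Un_cv (fun n => K * u n) (K * l).
Proof. intro H. apply CV_mult; auto. intros eps He. exists 0%nat. intros. unfold Rdist. rewrite Rminus_diag, Rabs_R0. lra. Qed.

Theorem theorem4 (S : Type) (mu : (S -> Prop) -> R) (a rho k : R) :
  0 < a -> 0 < rho -> 0 < k ->
  (forall L L' : sfamily S, admissible mu L -> Permutation L L' ->
     P mu a rho k L' = P mu a rho k L) /\
  (forall (L : sfamily S) (Al : S -> Prop), L <> nil ->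
     admissible mu (L ++ (Al, 0%nat) :: nil) ->
     infinite_sum (fun r => P mu a rho k (L ++ (Al, r) :: nil)) (P mu a rho k L)).
Proof.
 intros Ha Hr Hk. split.
 - intros L L' _ Hp. unfold P. rewrite (perm_sum_mu mu L L' Hp), (perm_sum_n L L' Hp), (perm_prod mu k L L' Hp). reflexivity.
 - intros L Al _ [Hadm _].
   assert (HM: 0 <= sum_mu mu L) by (apply sum_mu_nonneg; intros; apply Hadm; apply in_or_app; auto).
   assert (Hm0: 0 <= mu Al) by (apply (Hadm (Al, 0%nat)); apply in_or_app; right; left; auto).
   pose proof (sum_n_nonneg L) as HN.
   assert (Eterm: forall r, P mu a rho k (L ++ (Al, r) :: nil) =
      rising rho (k * (sum_mu mu L + mu Al)) * rising a (sum_n L + INR r)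
      / rising (rho + a) (k * (sum_mu mu L + mu Al) + (sum_n L + INR r))
      * (prod_factor mu k L * (rising (k * mu Al) (INR r) / INR (fact r)))).
   { intro r. unfold P. rewrite sum_mu_app, sum_n_app, prod_app. reflexivity. }
   set (M := sum_mu mu L) in *. set (Nn := sum_n L) in *. set (pf := prod_factor mu k L) in *.
   destruct Hm0 as [Hm0 | Hm0].
   +
     set (x := rho + k * M). set (y := a + Nn). set (m := k * mu Al). set (c := x + y + m).
     assert (Hx: 0 < x) by (unfold x; nra). assert (Hy: 0 < y) by (unfold y; lra).
     assert (Hm: 0 < m) by (unfold m; nra). assert (Hc: 0 < c) by (unfold c; lra).
     destruct (Gamma_spec x Hx) as [_ Gx]. destruct (Gamma_spec y Hy) as [_ Gy].
     destruct (Gamma_spec m Hm) as [_ Gm]. destruct (Gamma_spec c Hc) as [_ Gc].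
     destruct (Gamma_spec (x+m) ltac:(lra)) as [_ Gxm]. destruct (Gamma_spec (x+y) ltac:(lra)) as [_ Gxy].
     destruct (Gamma_spec rho Hr) as [_ Grho]. destruct (Gamma_spec a Ha) as [_ Ga].
     destruct (Gamma_spec (rho+a) ltac:(lra)) as [_ Gra].
     set (K := P mu a rho k L * (Gamma (x+m) * Gamma (x+y) / (Gamma x * Gamma c))).
     assert (Ht: forall r, P mu a rho k (L ++ (Al, r) :: nil) = K * T y m c r).
     { intro r. rewrite Eterm. unfold K, P. fold M Nn pf.
       rewrite rising_nat by (left; apply Rmult_lt_0_compat; lra).
       rewrite !rising_pos by lra.
       replace (rho + k * (M + mu Al)) with (x + m) by (unfold x, m; ring).
       replace (a + (Nn + INR r)) with (y + INR r) by (unfold y; ring).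
       replace (rho + a + (k * (M + mu Al) + (Nn + INR r))) with (c + INR r) by (unfold c, x, y, m; ring).
       replace (rho + k * M) with x by (unfold x; ring).
       replace (a + Nn) with y by (unfold y; ring).
       replace (rho + a + (k * M + Nn)) with (x + y) by (unfold x, y; ring).
       fold m.
       rewrite !Gamma_poch by lra.
       unfold T. pose proof (poch_pos y r Hy). pose proof (poch_pos c r Hc). pose proof (INR_fact_pos r).
       field. repeat split; lra. }
     pose proof (gauss y m c Hy Hm ltac:(unfold c; lra)) as HG.
     replace (c - y - m) with x in HG by (unfold c; ring).
     replace (c - y) with (x + m) in HG by (unfold c; ring).
     replace (c - m) with (x + y) in HG by (unfold c; ring).
     pose proof (Un_cv_const_mult _ _ K HG) as HK.
     replace (K * (Gamma c * Gamma x / (Gamma (x + m) * Gamma (x + y)))) with (P mu a rho k L) in HK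
       by (unfold K; field; repeat split; lra).
     intros eps He. destruct (HK eps He) as [N0 HN0]. exists N0. intros n Hn.
     replace (sum_f_R0 (fun r => P mu a rho k (L ++ (Al, r) :: nil)) n) with (K * Ssum y m c n).
     apply HN0; auto.
     unfold Ssum. rewrite scal_sum. apply sum_eq. intros i _. rewrite Ht. ring.
   +
     assert (Ht: forall r, P mu a rho k (L ++ (Al, Datatypes.S r) :: nil) = 0).
     { intro r. rewrite Eterm. rewrite <- Hm0, Rmult_0_r. rewrite rising_nat by lra. rewrite poch_0.
       unfold Rdiv. ring. }
     assert (H0: P mu a rho k (L ++ (Al, 0%nat) :: nil) = P mu a rho k L).
     { rewrite Eterm. rewrite <- Hm0. rewrite Rmult_0_r. rewrite rising_nat by lra.
       unfold P. fold M Nn pf. simpl poch. change (INR 0) with 0. change (INR (fact 0)) with 1.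
       rewrite !Rplus_0_r. unfold Rdiv. rewrite Rinv_1. ring. }
     intros eps He. exists 0%nat. intros n _.
     replace (sum_f_R0 (fun r => P mu a rho k (L ++ (Al, r) :: nil)) n) with (P mu a rho k L).
     unfold Rdist. rewrite Rminus_diag, Rabs_R0. lra.
     induction n. simpl. auto. simpl sum_f_R0. rewrite Ht, <- IHn. ring.
Qed.
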